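(* Let $X$ be an irreducible finite dimensional CAT(0) cube complex. For any infinite descending chain $s_1\supsetneq s_2\supsetneq\cdots$ of pairwise strongly separated half-spaces, $\bigcap_n s_n\subset\overline X$ is a single point. In particular, if $\xi_1\ne\xi_2$ are in $\partial_rX$, then there are disjoint strongly separated half-spaces $h_1,h_2$ with $\xi_1\in h_1$ and $\xi_2\in h_2$.
   Context: Conventions. $X$ is a finite-dimensional, second countable CAT(0) cube complex identified with its vertex set. $\mathfrak H$ is the set of half-spaces, $h^*=X\setminus h$; $U_v=\{h:v\in h\}$; Roller compactification $\overline X$ = closure of $\{U_v\}$ in $2^{\mathfrak H}$ (product topology), $\partial X=\overline X\setminus X$; each $\xi\in\overline X$ is a subset $U_\xi$, and $h$ is regarded as the subset $\{\xi:h\in U_\xi\}$ of $\overline X$. Transverse: $h\cap k,h\cap k^*,h^*\cap k,h^*\cap k^*$ all nonempty; strongly separated: no half-space transverse to both. Irreducible: not a nontrivial product. Regular points $\partial_rX$ (irreducible $X$): $\xi\in\partial X$ such that for all $h_1,h_2\in U_\xi$ there is $k\in U_\xi$ with $k\subset h_1\cap h_2$ strongly separated from both. *)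

(* Defs.v *)
(* A CAT(0) cube complex is represented combinatorially by its
   1-skeleton, which is a median graph (Chepoi / Roller / Gerasimov); the
   complex is identified with its vertex set, as in the paper's conventions. *)
From Stdlib Require Import List Arith.
Import ListNotations.
Set Implicit Arguments.

Section CubeComplex.
Variable V : Type.
Variable adj : V -> V -> Prop.

Inductive walk : V -> V -> nat -> Prop :=
| walk0 : forall x, walk x x 0
| walkS : forall x y z n, adj x y -> walk y z n -> walk x z (S n).

Definition dist (x y : V) (d : nat) : Prop :=
  walk x y d /\ forall n, walk x y n -> d <= n.

Definition between (x z y : V) : Prop :=
  exists a b, dist x z a /\ dist z y b /\ dist x y (a + b).

Definition median_graph : Prop :=
  (forall x y, adj x y -> adj y x) /\
  (forall x, ~ adj x x) /\
  (forall x y, exists n, walk x y n) /\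
  (forall x y z, exists m,
      (between x m y /\ between y m z /\ between x m z) /\
      forall m', between x m' y /\ between y m' z /\ between x m' z -> m' = m).

Definition convex (S : V -> Prop) : Prop :=
  forall x y z, S x -> S y -> between x z y -> S z.

Definition is_halfspace (h : V -> Prop) : Prop :=
  (exists v, h v) /\ (exists w, ~ h w) /\ convex h /\ convex (fun v => ~ h v).

Definition hcompl (h : V -> Prop) : V -> Prop := fun v => ~ h v.

Definition meets (a b : V -> Prop) : Prop := exists v, a v /\ b v.

Definition transverse (h k : V -> Prop) : Prop :=
  meets h k /\ meets h (hcompl k) /\ meets (hcompl h) k /\
  meets (hcompl h) (hcompl k).

Definition strongly_separated (h k : V -> Prop) : Prop :=
  ~ exists j, is_halfspace j /\ transverse j h /\ transverse j k.

(* finite dimension: bounded size of families of pairwise transverse half-spaces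
   (= maximal number of pairwise crossing hyperplanes = max cube dimension) *)
Definition finite_dimensional : Prop :=
  exists D, forall l : list (V -> Prop),
    Forall is_halfspace l -> ForallOrdPairs transverse l -> length l <= D.

(* second countable: countably many vertices *)
Definition second_countable : Prop :=
  exists f : V -> nat, forall x y, f x = f y -> x = y.

Definition cart_adj (A B : Type) (eA : A -> A -> Prop) (eB : B -> B -> Prop)
  (p q : A * B) : Prop :=
  (eA (fst p) (fst q) /\ snd p = snd q) \/ (fst p = fst q /\ eB (snd p) (snd q)).

Definition irreducible : Prop :=
  ~ exists (A B : Type) (eA : A -> A -> Prop) (eB : B -> B -> Prop) (f : V -> A * B),
      (forall x y, f x = f y -> x = y) /\ (forall p, exists x, f x = p) /\
      (forall x y, adj x y <-> cart_adj eA eB (f x) (f y)) /\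
      (exists a1 a2 : A, a1 <> a2) /\ (exists b1 b2 : B, b1 <> b2).

(* Roller compactification: points are subsets U of the set of half-spaces
   lying in the closure of {U_v} for the product topology on 2^H. *)
Definition in_Xbar (U : (V -> Prop) -> Prop) : Prop :=
  forall l : list (V -> Prop), Forall is_halfspace l ->
    exists v, Forall (fun h => U h <-> h v) l.

Definition is_vertex_point (U : (V -> Prop) -> Prop) (v : V) : Prop :=
  forall h, is_halfspace h -> (U h <-> h v).

Definition in_boundary (U : (V -> Prop) -> Prop) : Prop :=
  in_Xbar U /\ ~ exists v, is_vertex_point U v.

Definition same_point (U U' : (V -> Prop) -> Prop) : Prop :=
  forall h, is_halfspace h -> (U h <-> U' h).

Definition hsubset (a b : V -> Prop) : Prop := forall v, a v -> b v.

Definition regular_point (U : (V -> Prop) -> Prop) : Prop :=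
  in_boundary U /\
  forall h1 h2, is_halfspace h1 -> is_halfspace h2 -> U h1 -> U h2 ->
    exists k, is_halfspace k /\ U k /\ hsubset k (fun v => h1 v /\ h2 v) /\
      strongly_separated k h1 /\ strongly_separated k h2.

End CubeComplex.

(* Main.v *)
Require Import Defs.
From Stdlib Require Import List Arith Lia Classical.
Import ListNotations.

Section Aux.
Variable V : Type.
Variable adj : V -> V -> Prop.
Hypothesis Hmed : median_graph adj.

Lemma walk0_eq (x y : V) : walk adj x y 0 -> x = y.
Proof. intro H; inversion H; auto. Qed.

Lemma adj_between (x y m : V) : adj x y -> Defs.between adj x m y -> m = x \/ m = y.
Proof.
  intros Ha [a [b [H1 [H2 H3]]]].
  assert (W : walk adj x y 1) by (eapply walkS; [exact Ha| constructor]).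
  destruct H3 as [_ H3]. specialize (H3 _ W).
  destruct a.
  - left. symmetry. apply walk0_eq. apply H1.
  - assert (b = 0) by lia. subst b. right. apply walk0_eq. apply H2.
Qed.

Lemma edge_lemma (A B : V -> Prop) (x y z : V) :
  convex adj A -> convex adj (fun v => ~ B v) -> hsubset B A ->
  adj x y -> B x -> ~ A y -> A z -> ~ B z -> False.
Proof.
  intros cA cB sub Ha Bx Ay Az Bz.
  destruct Hmed as [_ [_ [_ Hm]]].
  destruct (Hm x y z) as [m [[b1 [b2 b3]] _]].
  destruct (adj_between _ _ _ Ha b1) as [->| ->].
  - apply (cB y z x); auto.
  - apply Ay. apply (cA x z y); auto.
Qed.

Lemma compl_halfspace (h : V -> Prop) : is_halfspace adj h -> is_halfspace adj (hcompl h).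
Proof.
  intros [[v Hv] [[w Hw] [c1 c2]]]. unfold hcompl.
  split; [exists w; auto|]. split; [exists v; auto|]. split; auto.
  intros x y z Hx Hy Hb Hz. apply Hz. apply (c1 x y z); auto; apply NNPP; auto.
Qed.

Lemma Xbar_compl (U : (V -> Prop) -> Prop) (h : V -> Prop) : in_Xbar adj U -> is_halfspace adj h ->
  (U (hcompl h) <-> ~ U h).
Proof.
  intros HU Hh. destruct (HU [h; hcompl h]) as [v Hv].
  { constructor; auto. constructor; auto. apply compl_halfspace; auto. }
  inversion Hv; subst. inversion H2; subst. unfold hcompl in *. tauto.
Qed.

Section Seq.
Variable s : nat -> (V -> Prop).
Hypothesis Hs : forall n, is_halfspace adj (s n).
Hypothesis Hch : forall n, hsubset (s (S n)) (s n) /\ exists v, s n v /\ ~ s (S n) v.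
Hypothesis Hss : forall m n, m <> n -> strongly_separated adj (s m) (s n).

Lemma mono i j : i <= j -> hsubset (s j) (s i).
Proof.
  induction 1. intros v; auto.
  intros v Hv. apply IHle. apply (proj1 (Hch m)); auto.
Qed.

Lemma walk_lemma (x w : V) (d : nat) : walk adj x w d -> forall n0,
  (forall j, n0 <= j <= n0 + d -> s j x /\ ~ s j w) -> False.
Proof.
  induction 1 as [x0|x0 y w0 n Ha Hw IHwalk]; intros n0 H.
  - destruct (H n0) as [H1 H2]; [lia| auto].
  - destruct (classic (s (n0 + n) y)) as [Hy|Hy].
    + apply (IHwalk n0). intros j Hj. split.
      * apply (mono j (n0+n)); [lia| auto].
      * apply (H j). lia.
    + destruct (Hch (n0 + n)) as [sub [z [Hz1 Hz2]]].
      destruct (Hs (n0+n)) as [_ [_ [cA _]]].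
      destruct (Hs (S (n0+n))) as [_ [_ [_ cB]]].
      apply (edge_lemma (s (n0+n)) (s (S (n0+n))) x0 y z); auto.
      destruct (H (S (n0 + n))) as [Hx _]; [lia|]. auto.
Qed.

Lemma no_common (v : V) : exists n, ~ s n v.
Proof.
  apply NNPP. intro Hc.
  assert (Hall : forall n, s n v).
  { intro n. apply NNPP. intro Hn. apply Hc. exists n; auto. }
  destruct (Hs 0) as [_ [[w Hw] _]].
  destruct Hmed as [_ [_ [Hconn _]]]. destruct (Hconn v w) as [d Hd].
  apply (walk_lemma _ _ _ Hd 0). intros j _. split; auto.
  intro Hj. apply Hw. apply (mono 0 j); auto. lia.
Qed.

Lemma key (h : V -> Prop) : is_halfspace adj h ->
  exists n, hsubset (s n) h \/ hsubset (s n) (hcompl h).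
Proof.
  intro Hh. apply NNPP. intro Hc.
  assert (Hm : forall n, meets (s n) h /\ meets (s n) (hcompl h)).
  { intro n. split.
    - apply NNPP. intro Hn. apply Hc. exists n. right. intros v Hv Hv'.
      apply Hn. exists v; auto.
    - apply NNPP. intro Hn. apply Hc. exists n. left. intros v Hv.
      apply NNPP. intro Hv'. apply Hn. exists v; auto. }
  destruct Hh as [[a Ha] [[b Hb] Hcv]].
  destruct (no_common a) as [N HN]. destruct (no_common b) as [M HM].
  assert (Ht : forall n, N + M <= n -> transverse h (s n)).
  { intros n Hn. destruct (Hm n) as [[u [Hu1 Hu2]] [u' [Hu1' Hu2']]].
    unfold transverse, meets, hcompl. split; [exists u; auto|].
    split; [exists a; split; auto; intro; apply HN; apply (mono N n); auto; lia|].
    split; [exists u'; auto|].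
    exists b; split; auto; intro; apply HM; apply (mono M n); auto; lia. }
  apply (Hss (N+M) (S (N+M))); [lia|].
  exists h. split; [split; [exists a; auto|split;[exists b; auto|auto]]|].
  split; apply Ht; lia.
Qed.

Definition xi0 : (V -> Prop) -> Prop := fun h => exists n, hsubset (s n) h.

Lemma xi0_false h N : hsubset (s N) (hcompl h) -> ~ xi0 h.
Proof.
  intros HN [m Hm]. destruct (Hs (N + m)) as [[u Hu] _].
  apply (HN u). apply (mono N (N+m)); auto; lia.
  apply Hm. apply (mono m (N+m)); auto; lia.
Qed.

Lemma list_bound (l : list (V -> Prop)) : Forall (is_halfspace adj) l ->
  exists N, forall h, In h l -> hsubset (s N) h \/ hsubset (s N) (hcompl h).
Proof.
  induction 1 as [|h l Hh Hl IH].
  - exists 0; intros h [].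
  - destruct IH as [N HN]. destruct (key h Hh) as [M HM].
    exists (N + M). intros k [<-|Hk].
    + destruct HM as [HM|HM]; [left|right]; intros v Hv; apply HM;
      apply (mono M (N+M)); auto; lia.
    + destruct (HN k Hk) as [HM'|HM']; [left|right]; intros v Hv; apply HM';
      apply (mono N (N+M)); auto; lia.
Qed.

Lemma part1 : exists xi, in_Xbar adj xi /\ (forall n, xi (s n)) /\
       forall zeta, in_Xbar adj zeta -> (forall n, zeta (s n)) ->
         same_point adj zeta xi.
Proof.
  exists xi0. split; [|split].
  - intros l Hl. destruct (list_bound l Hl) as [N HN].
    destruct (Hs N) as [[v Hv] _]. exists v. apply Forall_forall.
    intros h Hh. destruct (HN h Hh) as [H|H].
    + split; [intros _; auto | intros _; exists N; auto].
    + split; [intro Hx; exfalso; apply (xi0_false h N H Hx) | intro Hx; exfalso; apply (H v Hv Hx)].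
  - intro n. exists n. intros v; auto.
  - intros zeta Hz Hzs h Hh. destruct (key h Hh) as [n [H|H]].
    + destruct (Hz [s n; h]) as [v Hv].
      { constructor; auto. }
      inversion Hv; subst. inversion H3; subst.
      split; [intros _; exists n; auto|intros _; apply H4; apply H; apply H2; auto].
    + destruct (Hz [s n; h]) as [v Hv].
      { constructor; auto. }
      inversion Hv; subst. inversion H3; subst.
      split; [intro Hx; exfalso; apply (H v); [apply H2; auto| apply H4; auto]
             |intro Hx; exfalso; apply (xi0_false h n H Hx)].
Qed.
End Seq.

Lemma sep (xi1 xi2 : (V -> Prop) -> Prop) (h : V -> Prop) :
  regular_point adj xi1 -> regular_point adj xi2 -> is_halfspace adj h ->
  xi1 h -> xi2 (hcompl h) ->
  exists h1 h2, is_halfspace adj h1 /\ is_halfspace adj h2 /\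
       (forall v, ~ (h1 v /\ h2 v)) /\ strongly_separated adj h1 h2 /\
       xi1 h1 /\ xi2 h2.
Proof.
  intros [_ R1] [_ R2] Hh H1 H2.
  destruct (R1 h h Hh Hh H1 H1) as [k [Hk [Xk [Sk [SSk _]]]]].
  pose proof (compl_halfspace h Hh) as Hh'.
  destruct (R2 _ _ Hh' Hh' H2 H2) as [k' [Hk' [Xk' [Sk' [SSk' _]]]]].
  exists k, k'. split; auto. split; auto. split.
  { intros v [a b]. destruct (Sk v a). destruct (Sk' v b). auto. }
  split; auto.
  intros [j [Hj [[[a [a1 a2]] [[b [b1 b2]] [[c [c1 c2]] [d [d1 d2]]]]] [[e [e1 e2]] [[f [f1 f2]] [[g [g1 g2]] [q [q1 q2]]]]]]]].
  apply SSk. exists j. split; auto. split.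
  - split; [exists a; auto|]. split; [exists b; auto|]. split; [exists c; auto|]. exists d; auto.
  - split; [exists a; split; auto; apply (Sk a a2)|].
    split; [exists e; split; auto; apply (Sk' e e2)|].
    split; [exists c; split; auto; apply (Sk c c2)|].
    exists g; split; auto; apply (Sk' g g2).
Qed.

End Aux.

Theorem corollary7p5 (V : Type) (adj : V -> V -> Prop)
  (Hmed : median_graph adj) (Hfd : finite_dimensional adj)
  (Hsc : second_countable V) (Hirr : irreducible adj) :
  (forall s : nat -> (V -> Prop),
     (forall n, is_halfspace adj (s n)) ->
     (forall n, hsubset (s (S n)) (s n) /\ exists v, s n v /\ ~ s (S n) v) ->
     (forall m n, m <> n -> strongly_separated adj (s m) (s n)) ->
     exists xi, in_Xbar adj xi /\ (forall n, xi (s n)) /\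
       forall zeta, in_Xbar adj zeta -> (forall n, zeta (s n)) ->
         same_point adj zeta xi)
  /\
  (forall xi1 xi2, regular_point adj xi1 -> regular_point adj xi2 ->
     ~ same_point adj xi1 xi2 ->
     exists h1 h2, is_halfspace adj h1 /\ is_halfspace adj h2 /\
       (forall v, ~ (h1 v /\ h2 v)) /\ strongly_separated adj h1 h2 /\
       xi1 h1 /\ xi2 h2).
Proof.
  split.
  - intros s Hs Hch Hss. exact (part1 V adj Hmed s Hs Hch Hss).
  - intros xi1 xi2 R1 R2 Hn.
    assert (Hh : exists h, is_halfspace adj h /\ ~ (xi1 h <-> xi2 h)).
    { apply NNPP. intro C. apply Hn. intros h Hh. apply NNPP. intro D.
      apply C. exists h. auto. }
    destruct Hh as [h [Hh D]].
    pose proof R1 as [[X1 _] _]. pose proof R2 as [[X2 _] _].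
    destruct (classic (xi1 h)) as [A|A].
    + apply (sep V adj xi1 xi2 h); auto.
      apply (proj2 (Xbar_compl V adj xi2 h X2 Hh)). tauto.
    + assert (B : xi2 h) by tauto.
      pose proof (compl_halfspace V adj h Hh) as Hh'.
      apply (sep V adj xi1 xi2 (hcompl h)); auto.
      * apply (proj2 (Xbar_compl V adj xi1 h X1 Hh)). auto.
      * apply (proj2 (Xbar_compl V adj xi2 _ X2 Hh')).
        intro E. apply (proj1 (Xbar_compl V adj xi2 h X2 Hh) E). auto.
Qed.
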